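(* Let $n,m \in \mathbb{N}$, $a \in \Delta_n^+$, $b \in \Delta_m^+$, and let $g \colon \mathbb{R}^{n\times m} \to \mathbb{R}$ be the quadratic function \[ g(\pi) = \tfrac12 \langle \pi, H\pi\rangle + \langle C, \pi\rangle \quad \forall \pi \in \mathbb{R}^{n\times m}, \] where $H \in \mathbb{R}^{n\times n}$ is symmetric and $C \in \mathbb{R}^{n\times m}$. Assume $\lambda > \|H\|_\infty$. Let $T_\lambda \colon \mathbb{R}^{n\times m} \to \Pi_{a,b}^+$ be defined by $T_\lambda(A) = \operatorname{argmin}_{\pi \in \Pi_{a,b}} \big(\langle \nabla g(A), \pi\rangle + \lambda h(\pi)\big)$. Then $T_\lambda$ is a contraction with respect to the distance induced by $\|\cdot\|_1$ and has a unique fixed point $\pi^\star \in \Pi_{a,b}^+$. Moreover, for any $\pi^{(0)} \in \Pi_{a,b}$, the sequence defined by $\pi^{(k+1)} = T_\lambda(\pi^{(k)})$ for $k \ge 0$ satisfies, for every $T \in \mathbb{N}$, \[ \|\pi^{(T)} - \pi^\star\|_1 \le \frac{(\|H\|_\infty/\lambda)^T}{1 - \|H\|_\infty/\lambda}\, \|\pi^{(1)} - \pi^{(0)}\|_1 . \]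
   Context: $\Delta_n^+ := \{a \in \mathbb{R}^n : a_i > 0\ \forall i,\ \sum_i a_i = 1\}$. $\Pi_{a,b} := \{\pi \in \mathbb{R}_+^{n\times m} : \pi 1_m = a,\ \pi^\top 1_n = b\}$ and $\Pi_{a,b}^+$ is its subset with all entries strictly positive. $h(\pi) := \sum_{i,j}\pi_{ij}\log\frac{\pi_{ij}}{e}$ (with $0\log0=0$); for each $A$ the minimizer defining $T_\lambda(A)$ exists, is unique, and lies in $\Pi_{a,b}^+$. $\langle A,B\rangle = \mathrm{tr}(A^\top B)$; $\|A\|_1 := \sum_{i,j}|A_{ij}|$ and $\|A\|_\infty := \max_{i,j}|A_{ij}|$ (so $\|H\|_\infty$ is the largest absolute entry of $H$). *)

(* Defs.v *)
From HB Require Import structures.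
From mathcomp Require Import all_boot all_order all_algebra.
From mathcomp Require Import reals.
From mathcomp.analysis Require Import sequences exp.
Set Implicit Arguments. Unset Strict Implicit. Unset Printing Implicit Defensive.
Import Order.TTheory GRing.Theory Num.Theory.
Local Open Scope ring_scope.

Section Defs.
Variable R : realType.

Definition simplex_pos (n : nat) (a : 'cV[R]_n) : Prop :=
  (forall i, 0 < a i 0) /\ \sum_(i < n) a i 0 = 1.

Definition couplings (n m : nat) (a : 'cV[R]_n) (b : 'cV[R]_m)
    (pi : 'M[R]_(n, m)) : Prop :=
  (forall i j, 0 <= pi i j) /\
  pi *m const_mx 1 = a /\ pi^T *m const_mx 1 = b.

Definition couplings_pos (n m : nat) (a : 'cV[R]_n) (b : 'cV[R]_m)
    (pi : 'M[R]_(n, m)) : Prop :=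
  couplings a b pi /\ (forall i j, 0 < pi i j).

Definition frob (n m : nat) (A B : 'M[R]_(n, m)) : R := \tr (A^T *m B).

Definition norm1 (n m : nat) (A : 'M[R]_(n, m)) : R :=
  \sum_(i < n) \sum_(j < m) `|A i j|.

Definition norminf (n m : nat) (A : 'M[R]_(n, m)) : R :=
  \big[Num.max/0]_(i < n) \big[Num.max/0]_(j < m) `|A i j|.

Definition entropy_h (n m : nat) (pi : 'M[R]_(n, m)) : R :=
  \sum_(i < n) \sum_(j < m)
     (if pi i j == 0 then 0 else pi i j * ln (pi i j / expR 1)).

Definition quad_g (n m : nat) (H : 'M[R]_n) (C : 'M[R]_(n, m))
    (pi : 'M[R]_(n, m)) : R :=
  2^-1 * frob pi (H *m pi) + frob C pi.

(* Gradient of quad_g at A: (H + H^T)/2 A + C, which equals H A + C for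
   symmetric H. *)
Definition grad_g (n m : nat) (H : 'M[R]_n) (C : 'M[R]_(n, m))
    (A : 'M[R]_(n, m)) : 'M[R]_(n, m) :=
  (2^-1 *: (H + H^T)) *m A + C.

Definition T_obj (n m : nat) (H : 'M[R]_n) (C : 'M[R]_(n, m)) (lam : R)
    (A pi : 'M[R]_(n, m)) : R :=
  frob (grad_g H C A) pi + lam * entropy_h pi.

Definition is_T_lambda (n m : nat) (a : 'cV[R]_n) (b : 'cV[R]_m)
    (H : 'M[R]_n) (C : 'M[R]_(n, m)) (lam : R)
    (T : 'M[R]_(n, m) -> 'M[R]_(n, m)) : Prop :=
  forall A, couplings a b (T A) /\
    forall pi, couplings a b pi -> T_obj H C lam A (T A) <= T_obj H C lam A pi.

End Defs.

(* Main.v *)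
Require Import Defs.
From HB Require Import structures.
From mathcomp Require Import all_boot all_order all_algebra.
From mathcomp Require Import reals.
From mathcomp.analysis Require Import sequences exp.
From mathcomp Require Import all_classical all_reals all_analysis.
From mathcomp Require Import ring lra.
Import Order.TTheory GRing.Theory Num.Theory numFieldNormedType.Exports.
Set Implicit Arguments. Unset Strict Implicit. Unset Printing Implicit Defensive.
Local Open Scope ring_scope.
Section P1.
Variable R : realType.
Variables n m : nat.

Definition s2 (f : 'I_n -> 'I_m -> R) : R := \sum_(i < n) \sum_(j < m) f i j.

Lemma s2D f g : s2 f + s2 g = s2 (fun i j => f i j + g i j).
Proof. rewrite /s2 -big_split /=; apply: eq_bigr => i _; by rewrite -big_split. Qed.

Lemma s2Z c f : c * s2 f = s2 (fun i j => c * f i j).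
Proof. rewrite /s2 mulr_sumr; apply: eq_bigr => i _; by rewrite mulr_sumr. Qed.

Lemma s2N f : - s2 f = s2 (fun i j => - f i j).
Proof. rewrite /s2 -sumrN; apply: eq_bigr => i _; by rewrite -sumrN. Qed.

Lemma s2_eq f g : (forall i j, f i j = g i j) -> s2 f = s2 g.
Proof. move=> H; apply: eq_bigr => i _; apply: eq_bigr => j _; exact: H. Qed.

Lemma s2_le f g : (forall i j, f i j <= g i j) -> s2 f <= s2 g.
Proof. move=> H; apply: ler_sum => i _; apply: ler_sum => j _; exact: H. Qed.

Lemma s2_ge0 f : (forall i j, 0 <= f i j) -> 0 <= s2 f.
Proof. move=> H; apply: sumr_ge0 => i _; apply: sumr_ge0 => j _; exact: H. Qed.

Lemma s2_const c : s2 (fun _ _ => c) = (n * m)%:R * c.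
Proof.
rewrite /s2; under eq_bigr do rewrite sumr_const card_ord.
by rewrite sumr_const card_ord -mulrnA mulr_natl mulnC.
Qed.

Lemma s2_entry f i j : (forall i j, 0 <= f i j) -> f i j <= s2 f.
Proof.
move=> H; rewrite /s2 (bigD1 i) //= (bigD1 j) //= -addrA lerDl.
apply: addr_ge0; first by apply: sumr_ge0 => k _; exact: H.
by apply: sumr_ge0 => k _; apply: sumr_ge0 => l _; exact: H.
Qed.

Lemma s2_eq0 f : (forall i j, 0 <= f i j) -> s2 f = 0 -> forall i j, f i j = 0.
Proof.
move=> H E i j; apply/eqP; rewrite eq_le H andbT -E; exact: s2_entry.
Qed.

Lemma frobE (A B : 'M[R]_(n, m)) : frob A B = s2 (fun i j => A i j * B i j).
Proof.
rewrite /frob /mxtrace /s2 exchange_big /=; apply: eq_bigr => j _.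
rewrite mxE; apply: eq_bigr => i _; by rewrite mxE.
Qed.

Lemma norm1E (A : 'M[R]_(n, m)) : norm1 A = s2 (fun i j => `|A i j|).
Proof. by []. Qed.

Lemma norm1_ge0 (A : 'M[R]_(n, m)) : 0 <= norm1 A.
Proof. by apply: s2_ge0 => i j. Qed.

Lemma norm1_tri (A B : 'M[R]_(n, m)) : norm1 (A + B) <= norm1 A + norm1 B.
Proof.
rewrite !norm1E s2D; apply: s2_le => i j; rewrite mxE; exact: ler_normD.
Qed.

Lemma norm1_sym (A B : 'M[R]_(n, m)) : norm1 (A - B) = norm1 (B - A).
Proof. rewrite !norm1E; apply: s2_eq => i j; by rewrite !mxE distrC. Qed.

Lemma norm1_entry (A : 'M[R]_(n, m)) i j : `|A i j| <= norm1 A.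
Proof. exact: (@s2_entry (fun i j => `|A i j|)). Qed.

Lemma norm1_eq0 (A B : 'M[R]_(n, m)) : norm1 (A - B) = 0 -> A = B.
Proof.
move=> H; apply/matrixP => i j.
have := @s2_eq0 (fun i j => `|(A - B) i j|) (fun _ _ => normr_ge0 _) H i j.
by rewrite !mxE => /eqP; rewrite normr_eq0 subr_eq0 => /eqP.
Qed.

Variables (a : 'cV[R]_n) (b : 'cV[R]_m).

Lemma coupE (pi : 'M[R]_(n, m)) : couplings a b pi <->
  [/\ (forall i j, 0 <= pi i j), (forall i, \sum_j pi i j = a i 0)
    & (forall j, \sum_i pi i j = b j 0)].
Proof.
split.
  case=> H0 [Ha Hb]; split => //.
    move=> i; rewrite -Ha mxE; apply: eq_bigr => j _; by rewrite mxE mulr1.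
  move=> j; rewrite -Hb mxE; apply: eq_bigr => i _; by rewrite !mxE mulr1.
case=> H0 Ha Hb; split => //; split; apply/matrixP => i k; rewrite (ord1 k) mxE.
  rewrite -Ha; apply: eq_bigr => j _; by rewrite mxE mulr1.
rewrite -Hb; apply: eq_bigr => j _; by rewrite !mxE mulr1.
Qed.

Lemma coup_mass (pi : 'M[R]_(n, m)) : simplex_pos a -> couplings a b pi ->
  s2 (fun i j => pi i j) = 1.
Proof.
move=> [_ Sa] /coupE [_ Ha _]; rewrite /s2 -Sa; apply: eq_bigr => i _; exact: Ha.
Qed.

Lemma coup_conv (p q : 'M[R]_(n, m)) (t : R) : 0 <= t <= 1 ->
  couplings a b p -> couplings a b q ->
  couplings a b (\matrix_(i, j) ((1 - t) * p i j + t * q i j)).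
Proof.
move=> /andP[t0 t1] /coupE [p0 pa pb] /coupE [q0 qa qb]; apply/coupE; split.
- move=> i j; rewrite mxE; apply: addr_ge0; apply: mulr_ge0 => //; lra.
- move=> i; under eq_bigr do rewrite mxE.
  by rewrite big_split /= -!mulr_sumr pa qa; ring.
- move=> j; under eq_bigr do rewrite mxE.
  by rewrite big_split /= -!mulr_sumr pb qb; ring.
Qed.

End P1.
Section P2.
Variable R : realType.

Lemma ln_ge1 (c : R) : 0 < c -> 1 - c^-1 <= ln c.
Proof.
move=> c0.
have := @le_ln1Dx R (c^-1 - 1).
rewrite addrCA subrr addr0 lnV ?posrE // => H.
have ci : 0 < c^-1 by rewrite invr_gt0.
have : -1 < c^-1 - 1 by lra.
move/H; lra.
Qed.

Definition uf (x : R) := if x == 0 then 0 else x * ln (x / expR 1).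

Lemma ufE (x : R) : 0 <= x -> uf x = x * ln x - x.
Proof.
rewrite /uf; case: eqP => [->|/eqP x0 xge]; first by rewrite mul0r subr0.
have xp : 0 < x by rewrite lt_def x0.
by rewrite ln_div ?posrE ?expR_gt0 // expRK mulrBr mulr1.
Qed.

Lemma uf_conv (x y : R) : 0 < x -> 0 <= y -> uf x + ln x * (y - x) <= uf y.
Proof.
move=> x0 y0; rewrite (@ufE y y0) (@ufE x (ltW x0)).
case: (eqVneq y 0) => [->|yn0]; first by rewrite mul0r; nra.
have yp : 0 < y by rewrite lt_def yn0.
have h := @ln_ge1 (y / x) (divr_gt0 yp x0).
rewrite ln_div ?posrE // invf_div in h.
have e : y * (1 - x / y) = y - x.
  by rewrite mulrBr mulr1 mulrCA divff // mulr1.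
have : y * (1 - x / y) <= y * (ln y - ln x) by rewrite ler_pM2l.
rewrite e -subr_ge0 => hh; rewrite -subr_ge0.
have -> : y * ln y - y - (x * ln x - x + ln x * (y - x)) =
  y * (ln y - ln x) - (y - x) by ring.
exact: hh.
Qed.
End P2.

Section P3.
Variable R : realType.
Variables n m : nat.
Variables (a : 'cV[R]_n) (b : 'cV[R]_m) (H : 'M[R]_n) (C : 'M[R]_(n, m)) (lam : R).

Lemma TobjE A (x : 'M[R]_(n, m)) : T_obj H C lam A x =
  s2 (fun i j => grad_g H C A i j * x i j + lam * uf (x i j)).
Proof. by rewrite /T_obj frobE /entropy_h -/(s2 _) s2Z s2D. Qed.

Lemma Fconv A (x y : 'M[R]_(n, m)) : 0 <= lam ->
  (forall i j, 0 < x i j) -> (forall i j, 0 <= y i j) ->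
  T_obj H C lam A x +
    s2 (fun i j => (grad_g H C A i j + lam * ln (x i j)) * (y i j - x i j))
  <= T_obj H C lam A y.
Proof.
move=> l0 xp yp; rewrite !TobjE s2D; apply: s2_le => i j.
have h := uf_conv (xp i j) (yp i j).
have := ler_wpM2l l0 h. nra.
Qed.

Lemma FO A (pi y : 'M[R]_(n, m)) (t : R) :
  couplings a b pi ->
  (forall z, couplings a b z -> T_obj H C lam A pi <= T_obj H C lam A z) ->
  couplings a b y -> 0 <= lam -> 0 < t <= 1 ->
  (forall i j, 0 < (1 - t) * pi i j + t * y i j) ->
  0 <= s2 (fun i j => (grad_g H C A i j + lam * ln ((1 - t) * pi i j + t * y i j))
                        * (y i j - pi i j)).
Proof.
move=> cp hmin cy l0 /andP[t0 t1] xp.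
set x := \matrix_(i, j) ((1 - t) * pi i j + t * y i j).
have cx : couplings a b x by apply: coup_conv => //; rewrite ltW.
have h1 := hmin x cx.
have xp' : forall i j, 0 < x i j by move=> i j; rewrite mxE.
have [p0 _ _] := (coupE a b pi).1 cp.
have h2 := Fconv A l0 xp' p0.
set S := s2 _.
have E : s2 (fun i j => (grad_g H C A i j + lam * ln (x i j)) * (pi i j - x i j)) = - t * S.
  rewrite /S s2Z; apply: s2_eq => i j; rewrite !mxE; ring.
rewrite E in h2.
have : 0 <= t * S by lra.
by rewrite pmulr_rge0.
Qed.
End P3.
Section P2b.
Local Open Scope classical_set_scope.
Variable R : realType.
Lemma lnD (x : R) : 0 < x -> is_derive x 1 (fun y : R => (y+1) * ln y - 2 * y) ((x+1) * x^-1 + ln x - 2).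
Proof.
move=> x0.
have Hl := is_derive1_ln x0.
apply: is_derive_eq.
rewrite /GRing.scale /= !mulr1 addr0; congr (_ + _ - _); exact: mulr1.
Qed.

Lemma ln_lb (r : R) : 1 <= r -> 2 * (r - 1) / (r + 1) <= ln r.
Proof.
move=> r1.
have r0 : 0 < r by apply: lt_le_trans r1.
have Hd : forall x, x \in `]1, r[%R -> is_derive x 1 (fun y : R => (y+1) * ln y - 2 * y)
   ((x+1) * x^-1 + ln x - 2).
  move=> x; rewrite in_itv /= => /andP[x1 _]; apply: lnD; lra.
have Hc : {within `[1, r], continuous (fun y : R => (y+1) * ln y - 2 * y)}.
  apply: derivable_within_continuous => x; rewrite in_itv /= => /andP[x1 _].
  have x0 : 0 < x by lra.
  have := @lnD x x0. case. done.
have [c cI E] := MVT_segment r1 Hd Hc.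
move: E; rewrite ln1 mulr0 add0r mulr1.
have c1 : 1 <= c by move: cI; rewrite in_itv /= => /andP[].
have c0 : 0 < c by apply: lt_le_trans c1.
have Hc2 := @ln_ge1 R c c0.
have : 0 <= (c + 1) / c + ln c - 2.
  rewrite mulrDl divff ?gt_eqF // mul1r. lra.
move=> Hd2 E.
rewrite ler_pdivrMr; last lra.
have : 0 <= ((c + 1) / c + ln c - 2) * (r - 1) by apply: mulr_ge0 => //; lra.
lra.
Qed.
End P2b.
Section P4.
Variable R : realType.

Lemma term_b (p P t : R) : 0 <= p -> 0 < P <= 1 -> 0 < t <= 1 ->
  ln ((1 - t) * p + t * P) * (P - p) <= - ln P * p.
Proof.
move=> p0 /andP[P0 P1] /andP[t0 t1].
set x := (1 - t) * p + t * P.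
have tP : 0 < t * P by apply: mulr_gt0.
have h1 : 0 <= (1 - t) * p by apply: mulr_ge0; lra.
have xp : 0 < x by rewrite /x; lra.
have lP : ln P <= 0 := ln_le0 P1.
have rhs : 0 <= - ln P * p by apply: mulr_ge0; lra.
case: (lerP p P) => hp.
- have h2 : (1 - t) * (p - P) <= 0 by apply: mulr_ge0_le0; lra.
  have x1 : x <= 1 by rewrite /x; nra.
  have lx : ln x <= 0 := ln_le0 x1.
  have : ln x * (P - p) <= 0 by apply: mulr_le0_ge0; lra.
  lra.
- have h2 : 0 <= (1 - t) * (p - P) by apply: mulr_ge0; lra.
  have xP : P <= x by rewrite /x; nra.
  have lx : ln P <= ln x by rewrite ler_ln ?posrE.
  have h3 : ln x * (P - p) <= ln P * (P - p) by apply: ler_wnM2r => //; lra.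
  have h4 : ln P * P <= 0 by apply: mulr_le0_ge0; lra.
  rewrite mulrBr in h3. rewrite mulNr. lra.
Qed.

Lemma term_a (P t : R) : 0 < P <= 1 -> 0 < t <= 1 ->
  ln ((1 - t) * 0 + t * P) * (P - 0) <= P * ln t.
Proof.
move=> /andP[P0 P1] /andP[t0 t1].
rewrite mulr0 add0r subr0 lnM ?posrE // mulrDl [P * _]mulrC gerDl.
apply: mulr_le0_ge0; [exact: ln_le0 | lra].
Qed.

Lemma bern (s : R) (k : nat) : 0 <= s -> 1 + k%:R * s <= (1 + s) ^+ k.
Proof.
move=> s0; elim: k => [|k IH]; first by rewrite mul0r addr0 expr0.
rewrite exprS -natr1.
have h : 0 <= k%:R * s * s by apply: mulr_ge0 => //; apply: mulr_ge0.
have : (1 + s) * (1 + k%:R * s) <= (1 + s) * (1 + s) ^+ k.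
  by apply: ler_wpM2l => //; lra.
nra.
Qed.

Lemma geom_small (q e : R) : 0 <= q < 1 -> 0 < e -> exists k : nat, q ^+ k <= e.
Proof.
move=> /andP[q0 q1] e0.
case: (eqVneq q 0) => [->|qn0]; first by exists 1%N; rewrite expr1 ltW.
have qp : 0 < q by rewrite lt_def qn0 q0.
set s := q^-1 - 1.
have sp : 0 < s by rewrite /s subr_gt0 invf_gt1.
set z := (e * s)^-1.
have zp : 0 <= z by rewrite /z invr_ge0 ltW // mulr_gt0.
have hk := Num.Theory.archi_boundP zp.
exists (Num.bound z).
set k := Num.bound z in hk *.
have hb := bern k (ltW sp).
have e1 : 1 + s = q^-1 by rewrite /s; ring.
rewrite e1 exprVn in hb.
have qk : 0 < q ^+ k by apply: exprn_gt0.
rewrite -(ler_pM2r qk) mulVf ?gt_eqF // in hb.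
have : z * s < k%:R * s by rewrite ltr_pM2r.
have ez : (e * s)^-1 * s = e^-1.
  by rewrite invfM -mulrA mulVf ?mulr1 // gt_eqF.
rewrite ez => hz.
have h1 : e^-1 * q ^+ k <= k%:R * s * q ^+ k.
  apply: ler_wpM2r; [exact: ltW | exact: ltW].
have h2 : k%:R * s * q ^+ k <= 1.
  have : 0 <= q ^+ k by exact: ltW.
  nra.
have : e^-1 * q ^+ k <= 1 by apply: le_trans h1 h2.
by rewrite mulrC ler_pdivrMr // mul1r.
Qed.
End P4.
Section P5.
Variable R : realType.
Variables n m : nat.
Variables (a : 'cV[R]_n) (b : 'cV[R]_m) (H : 'M[R]_n) (C : 'M[R]_(n, m)) (lam : R).

Lemma simplex_le1 k (v : 'cV[R]_k) : simplex_pos v -> forall i, v i 0 <= 1.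
Proof.
move=> [vp vs] i; rewrite -vs (bigD1 i) //= lerDl.
by apply: sumr_ge0 => j _; apply: ltW.
Qed.

Lemma s2_ind i0 j0 (c : R) :
  s2 (fun (i : 'I_n) (j : 'I_m) => if (i == i0) && (j == j0) then c else 0) = c.
Proof.
rewrite /s2 (bigD1 i0) //= [X in _ + X]big1; last first.
  by move=> i /negbTE -> ; rewrite big1.
rewrite addr0 (bigD1 j0) //= [X in _ + X]big1 ?eqxx ?addr0 //.
by move=> j /negbTE ->; rewrite andbF.
Qed.

Lemma T_pos A (pi : 'M[R]_(n, m)) : simplex_pos a -> simplex_pos b -> 0 < lam ->
  couplings a b pi ->
  (forall z, couplings a b z -> T_obj H C lam A pi <= T_obj H C lam A z) ->
  forall i j, 0 < pi i j.
Proof.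
move=> sa sb l0 cp hmin i0 j0.
have [p0 pa pb] := (coupE a b pi).1 cp.
rewrite lt_def p0 andbT; apply/negP => /eqP z0.
set P := \matrix_(i, j) (a i 0 * b j 0).
have Pp : forall i j, 0 < P i j.
  by move=> i j; rewrite mxE mulr_gt0 //; [exact: sa.1 | exact: sb.1].
have P1 : forall i j, P i j <= 1.
  move=> i j; rewrite mxE mulr_ile1 //; try exact: ltW (sa.1 _); try exact: ltW (sb.1 _).
  exact: simplex_le1. exact: simplex_le1.
have cP : couplings a b P.
  apply/coupE; split.
  - by move=> i j; apply: ltW.
  - move=> i; under eq_bigr do rewrite mxE.
    by rewrite -mulr_sumr sb.2 mulr1.
  - move=> j; under eq_bigr do rewrite mxE.
    by rewrite -mulr_suml sa.2 mul1r.
set G := grad_g H C A.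
set K1 := s2 (fun i j => G i j * (P i j - pi i j)).
set K0 := s2 (fun i j => - ln (P i j) * pi i j).
have K0p : 0 <= K0.
  apply: s2_ge0 => i j; apply: mulr_ge0 => //.
  rewrite oppr_ge0; exact: ln_le0.
set P0 := P i0 j0.
have key : forall t, 0 < t <= 1 -> 0 <= K1 + lam * (K0 + P0 * ln t).
  move=> t ht.
  have xp : forall i j, 0 < (1 - t) * pi i j + t * P i j.
    move=> i j; case/andP: ht => t0 t1.
    have : 0 <= (1 - t) * pi i j by apply: mulr_ge0 => //; lra.
    have : 0 < t * P i j by apply: mulr_gt0.
    lra.
  have h := FO cp hmin cP (ltW l0) ht xp.
  apply: le_trans h _.
  rewrite -(s2_ind i0 j0 (P0 * ln t)) /K0 s2D s2Z /K1 s2D.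
  apply: s2_le => i j.
  rewrite -/G mulrDl lerD2l -mulrA ler_pM2l //.
  case: ifP => [/andP[/eqP ei /eqP ej]|_].
    subst i0 j0.
    rewrite z0 mulr0 add0r /P0 mulr0 add0r.
    have := @term_a R (P i j) t; rewrite mulr0 add0r; apply => //; by rewrite Pp P1.
  by rewrite addr0; apply: term_b => //; rewrite Pp P1.
set M := (`|K1| + lam * K0) / (lam * P0) + 1.
have P0p : 0 < P0 := Pp i0 j0.
have lP : 0 < lam * P0 by apply: mulr_gt0.
have Mp : 0 < M.
  rewrite /M; have : 0 <= (`|K1| + lam * K0) / (lam * P0).
    apply: divr_ge0; last exact: ltW.
    apply: addr_ge0 => //; apply: mulr_ge0 => //; exact: ltW.
  lra.
have ht : 0 < expR (- M) <= 1.
  by rewrite expR_gt0 expR_le1 /= oppr_le0 ltW.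
have := key _ ht.
rewrite expRK.
have eM : lam * (P0 * M) = `|K1| + lam * K0 + lam * P0.
  rewrite /M mulrA mulrDr mulr1 [X in X + _]mulrC mulrAC -mulrA mulfV ?mulr1 //.
  by rewrite gt_eqF.
have e2 : K1 + lam * (K0 + P0 * - M) = K1 + lam * K0 - lam * (P0 * M) by ring.
rewrite e2 eM.
have := ler_norm K1.
have : 0 < lam * P0 := lP.
lra.
Qed.
End P5.
Section P6.
Variable R : realType.

Lemma lmean_ge (p q : R) : 0 < p -> 0 < q -> q <= p ->
  2 * (p - q) ^+ 2 / (p + q) <= (ln p - ln q) * (p - q).
Proof.
move=> p0 q0 qp.
have r1 : 1 <= p / q by rewrite ler_pdivlMr // mul1r.
have h := ln_lb r1.
rewrite ln_div ?posrE // in h.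
have e : 2 * (p / q - 1) / (p / q + 1) = 2 * (p - q) / (p + q).
  have : 0 < p / q by apply: divr_gt0.
  move=> pq.
  field; rewrite !gt_eqF //; lra.
rewrite e in h.
have : 2 * (p - q) / (p + q) * (p - q) <= (ln p - ln q) * (p - q).
  by apply: ler_wpM2r => //; lra.
have e2 : 2 * (p - q) / (p + q) * (p - q) = 2 * (p - q) ^+ 2 / (p + q).
  by rewrite expr2; field; rewrite gt_eqF //; lra.
by rewrite e2.
Qed.

Lemma lmean (p q : R) : 0 < p -> 0 < q ->
  2 * (p - q) ^+ 2 / (p + q) <= (ln p - ln q) * (p - q).
Proof.
move=> p0 q0; case: (lerP q p) => h; first exact: lmean_ge.
have := lmean_ge q0 p0 (ltW h).
have -> : (q - p) ^+ 2 = (p - q) ^+ 2 by rewrite -sqrrN opprB.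
have -> : (ln q - ln p) * (q - p) = (ln p - ln q) * (p - q) by ring.
by rewrite [q + p]addrC.
Qed.

Lemma amgm (x al : R) : 0 < al -> x <= x ^+ 2 / al + al / 4.
Proof.
move=> a0.
have h : 0 <= (x - al / 2) ^+ 2 / al by apply: divr_ge0; [exact: sqr_ge0 | exact: ltW].
have e : (x - al / 2) ^+ 2 / al = x ^+ 2 / al + al / 4 - x.
  by field; rewrite gt_eqF.
rewrite e in h; lra.
Qed.

Variables n m : nat.

Lemma pinsker (p q : 'M[R]_(n, m)) : (forall i j, 0 < p i j) -> (forall i j, 0 < q i j) ->
  s2 (fun i j => p i j) = 1 -> s2 (fun i j => q i j) = 1 ->
  (s2 (fun i j => `|p i j - q i j|)) ^+ 2 <=
    s2 (fun i j => (ln (p i j) - ln (q i j)) * (p i j - q i j)).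
Proof.
move=> pp qp sp sq.
set S := s2 _.
set Q := s2 (fun i j => (p i j - q i j) ^+ 2 / (p i j + q i j)).
have hQ : 2 * Q <= s2 (fun i j => (ln (p i j) - ln (q i j)) * (p i j - q i j)).
  rewrite /Q s2Z; apply: s2_le => i j; rewrite mulrA; exact: lmean.
have Q0 : 0 <= Q.
  apply: s2_ge0 => i j; apply: divr_ge0; first exact: sqr_ge0.
  by apply: ltW; apply: addr_gt0.
apply: le_trans hQ.
have S0 : 0 <= S by apply: s2_ge0.
case: (eqVneq S 0) => [->|Sn0]; first by rewrite expr0n /=; lra.
have Sp : 0 < S by rewrite lt_def Sn0 S0.
have hS : S <= Q / S + S / 2.
  have : S <= s2 (fun i j => (p i j - q i j) ^+ 2 / (p i j + q i j) / S
                              + S * (p i j + q i j) / 4).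
    apply: s2_le => i j.
    have w0 : 0 < S * (p i j + q i j) by apply: mulr_gt0 => //; apply: addr_gt0.
    have := amgm `|p i j - q i j| w0.
    rewrite real_normK ?num_real //.
    have -> : (p i j - q i j) ^+ 2 / (S * (p i j + q i j)) =
              (p i j - q i j) ^+ 2 / (p i j + q i j) / S.
      field; apply/andP; split; rewrite gt_eqF //; apply: addr_gt0 => //.
    done.
  rewrite -s2D.
  have -> : s2 (fun i j => (p i j - q i j) ^+ 2 / (p i j + q i j) / S) = Q / S.
    by rewrite mulrC s2Z; apply: s2_eq => i j; rewrite mulrC.
  have -> : s2 (fun i j => S * (p i j + q i j) / 4) = S / 2.
    rewrite (_ : S / 2 = (S / 4) * (s2 (fun i j => p i j) + s2 (fun i j => q i j))); last first.
      by rewrite sp sq; field.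
    by rewrite s2D s2Z; apply: s2_eq => i j; field.
  done.
have : S * S <= S * (Q / S + S / 2) by rewrite ler_pM2l.
rewrite mulrDr mulrCA mulfV ?gt_eqF // mulr1 expr2.
lra.
Qed.
End P6.
Section P7.
Variable R : realType.
Variables n m : nat.
Variables (a : 'cV[R]_n) (b : 'cV[R]_m) (H : 'M[R]_n) (C : 'M[R]_(n, m)) (lam : R).

Lemma norminf_ge0 : 0 <= norminf H.
Proof.
rewrite /norminf; elim/big_ind: _ => //; first by move=> x y hx hy; rewrite le_max hx.
move=> i _; elim/big_ind: _ => //; first by move=> x y hx hy; rewrite le_max hx.
Qed.

Lemma norminf_entry i k : `|H i k| <= norminf H.
Proof.
rewrite /norminf (bigD1 i) //= le_max; apply/orP; left.
by rewrite (bigD1 k) //= le_max lexx.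
Qed.

Lemma gradE A : H^T = H -> grad_g H C A = H *m A + C.
Proof.
move=> hs; rewrite /grad_g hs; congr (_ *m _ + _).
by apply/matrixP => i j; rewrite !mxE; field.
Qed.

Lemma row_le (X : 'M[R]_(n, m)) k j : `|X k j| <= \sum_l `|X k l|.
Proof.
rewrite (bigD1 j) //= lerDl; exact: sumr_ge0.
Qed.

Lemma grad_diff A B i j : H^T = H ->
  `|grad_g H C A i j - grad_g H C B i j| <= norminf H * norm1 (A - B).
Proof.
move=> hs; rewrite !gradE // !mxE.
rewrite (_ : forall x y c : R, x + c - (y + c) = x - y); last by move=> *; ring.
rewrite -sumrB.
apply: le_trans (ler_norm_sum _ _ _) _.
rewrite /norm1 mulr_sumr; apply: ler_sum => k _.
rewrite -mulrBr normrM.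
apply: le_trans (_ : norminf H * `|(A - B) k j| <= _).
  rewrite (_ : A k j - B k j = (A - B) k j); last by rewrite !mxE.
  apply: ler_wpM2r => //; exact: norminf_entry.
by apply: ler_wpM2l; [exact: norminf_ge0 | exact: row_le].
Qed.
End P7.
Section P8.
Variable R : realType.
Variables n m : nat.
Variables (a : 'cV[R]_n) (b : 'cV[R]_m) (H : 'M[R]_n) (C : 'M[R]_(n, m)) (lam : R).
Variable T : 'M[R]_(n, m) -> 'M[R]_(n, m).

Lemma contr : simplex_pos a -> simplex_pos b -> H^T = H -> norminf H < lam ->
  is_T_lambda a b H C lam T ->
  forall A B, norm1 (T A - T B) <= norminf H / lam * norm1 (A - B).
Proof.
move=> sa sb hs hl hT A B.
have N0 := norminf_ge0 H.
have l0 : 0 < lam := le_lt_trans N0 hl.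
have [c1 m1] := hT A; have [c2 m2] := hT B.
have pos1 := T_pos sa sb l0 c1 m1.
have pos2 := T_pos sa sb l0 c2 m2.
have ms1 := coup_mass sa c1.
have ms2 := coup_mass sa c2.
set p1 := T A in c1 m1 pos1 ms1 *.
set p2 := T B in c2 m2 pos2 ms2 *.
set N := norminf H in N0 hl *.
set D := norm1 (p1 - p2).
set Y := N * norm1 (A - B) * D.
have D0 : 0 <= D := norm1_ge0 _.
have AB0 : 0 <= norm1 (A - B) := norm1_ge0 _.
have Y0 : 0 <= Y by apply: mulr_ge0 => //; apply: mulr_ge0.
have key : forall t, 0 < t < 2^-1 -> lam * (1 - 2 * t) * D ^+ 2 <= Y.
  move=> t /andP[t0 t2].
  have ht1 : 0 < t <= 1 by rewrite t0 /=; lra.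
  have xp1 : forall i j, 0 < (1 - t) * p1 i j + t * p2 i j.
    move=> i j; apply: addr_gt0; apply: mulr_gt0 => //; lra.
  have xp2 : forall i j, 0 < (1 - t) * p2 i j + t * p1 i j.
    move=> i j; apply: addr_gt0; apply: mulr_gt0 => //; lra.
  have h1 := FO c1 m1 c2 (ltW l0) ht1 xp1.
  have h2 := FO c2 m2 c1 (ltW l0) ht1 xp2.
  set pm := \matrix_(i, j) ((1 - t) * p1 i j + t * p2 i j).
  set qm := \matrix_(i, j) ((1 - t) * p2 i j + t * p1 i j).
  have pmp : forall i j, 0 < pm i j by move=> i j; rewrite mxE.
  have qmp : forall i j, 0 < qm i j by move=> i j; rewrite mxE.
  have pms : s2 (fun i j => pm i j) = 1.
    rewrite (_ : 1 = (1 - t) * s2 (fun i j => p1 i j) + t * s2 (fun i j => p2 i j)).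
      by rewrite !s2Z s2D; apply: s2_eq => i j; rewrite mxE.
    by rewrite ms1 ms2; ring.
  have qms : s2 (fun i j => qm i j) = 1.
    rewrite (_ : 1 = (1 - t) * s2 (fun i j => p2 i j) + t * s2 (fun i j => p1 i j)).
      by rewrite !s2Z s2D; apply: s2_eq => i j; rewrite mxE.
    by rewrite ms1 ms2; ring.
  have hP := pinsker pmp qmp pms qms.
  set u := 1 - 2 * t.
  have u0 : 0 < u by rewrite /u; lra.
  have eS : s2 (fun i j => `|pm i j - qm i j|) = u * D.
    rewrite /D norm1E s2Z; apply: s2_eq => i j; rewrite !mxE.
    rewrite (_ : (1 - t) * p1 i j + t * p2 i j - ((1 - t) * p2 i j + t * p1 i j)
                 = u * (p1 i j - p2 i j)); last by rewrite /u; ring.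
    by rewrite normrM (gtr0_norm u0).
  set Sd := s2 (fun i j => (ln ((1 - t) * p1 i j + t * p2 i j)
                          - ln ((1 - t) * p2 i j + t * p1 i j)) * (p2 i j - p1 i j)).
  have eR : s2 (fun i j => (ln (pm i j) - ln (qm i j)) * (pm i j - qm i j)) = - u * Sd.
    rewrite /Sd s2Z; apply: s2_eq => i j; rewrite !mxE /u; ring.
  rewrite eS eR in hP.
  set GA := grad_g H C A. set GB := grad_g H C B.
  set E := s2 (fun i j => (GA i j - GB i j) * (p2 i j - p1 i j)).
  have eSum : s2 (fun i j => (GA i j + lam * ln ((1 - t) * p1 i j + t * p2 i j)) * (p2 i j - p1 i j))
      + s2 (fun i j => (GB i j + lam * ln ((1 - t) * p2 i j + t * p1 i j)) * (p1 i j - p2 i j))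
      = E + lam * Sd.
    by rewrite /E /Sd s2Z !s2D; apply: s2_eq => i j; ring.
  have hE : E <= Y.
    rewrite /Y /D (norm1E (p1 - p2)) s2Z /E; apply: s2_le => i j.
    apply: le_trans (ler_norm _) _.
    have ep : (p1 - p2) i j = p1 i j - p2 i j by rewrite !mxE.
    rewrite normrM ep [`|p2 i j - _|]distrC.
    apply: ler_wpM2r => //.
    exact: grad_diff.
  have hsum : 0 <= E + lam * Sd by rewrite -eSum; apply: addr_ge0.
  have h3 : lam * ((u * D) ^+ 2) <= lam * (- u * Sd) by rewrite ler_pM2l.
  have h4 : u * (lam * Sd) >= - (u * Y).
    rewrite -mulrN ler_pM2l //; lra.
  have h5 : u * (lam * u * D ^+ 2) <= u * Y.
    have e1 : u * (lam * u * D ^+ 2) = lam * ((u * D) ^+ 2) by ring.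
    have e2 : lam * (- u * Sd) = - (u * (lam * Sd)) by ring.
    rewrite e1; rewrite e2 in h3; lra.
  by rewrite ler_pM2l in h5.
have main : lam * D ^+ 2 <= Y.
  rewrite leNgt; apply/negP => hc.
  have lD : 0 < lam * D ^+ 2 by apply: le_lt_trans hc.
  set t := (lam * D ^+ 2 - Y) / (4 * (lam * D ^+ 2)).
  have t0 : 0 < t by rewrite /t divr_gt0 //; [lra | apply: mulr_gt0 => //; lra].
  have t2 : t < 2^-1.
    rewrite /t ltr_pdivrMr; last by apply: mulr_gt0 => //; lra.
    have : 0 <= Y := Y0. 
    have e : 2^-1 * (4 * (lam * D ^+ 2)) = 2 * (lam * D ^+ 2) by field.
    rewrite e; lra.
  have := key t; rewrite t0 t2 => /(_ isT).
  have e : lam * (1 - 2 * t) * D ^+ 2 = (lam * D ^+ 2 + Y) / 2.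
    rewrite /t; field; apply/andP; split; last by rewrite gt_eqF.
    by apply/eqP => Dz; move: lD; rewrite Dz expr0n mulr0 ltxx.
  rewrite e; lra.
case: (eqVneq D 0) => [->|Dn0].
  by apply: mulr_ge0 => //; apply: divr_ge0 => //; exact: ltW.
have Dp : 0 < D by rewrite lt_def Dn0 D0.
have : lam * D * D <= N * norm1 (A - B) * D by rewrite -mulrA -expr2.
rewrite ler_pM2r // => h.
by rewrite mulrAC ler_pdivlMr // mulrC.
Qed.
End P8.
Section Banach.
Variable R : realType.
Variables n m : nat.
Variable T : 'M[R]_(n, m) -> 'M[R]_(n, m).
Variable q : R.
Hypothesis q0 : 0 <= q.
Hypothesis q1 : q < 1.
Hypothesis hc : forall A B, norm1 (T A - T B) <= q * norm1 (A - B).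

Lemma norm1_0 (A : 'M[R]_(n, m)) : norm1 (A - A) = 0.
Proof.
rewrite subrr norm1E (@s2_eq _ _ _ _ (fun _ _ => 0)); first by rewrite s2_const mulr0.
by move=> i j; rewrite mxE normr0.
Qed.

Lemma split3 (X Y Z : 'M[R]_(n, m)) : norm1 (X - Z) <= norm1 (X - Y) + norm1 (Y - Z).
Proof.
have -> : X - Z = (X - Y) + (Y - Z) by rewrite addrA subrK.
exact: norm1_tri.
Qed.

Lemma iter_step y0 k : norm1 (iter k.+1 T y0 - iter k T y0) <= q ^+ k * norm1 (T y0 - y0).
Proof.
elim: k => [|k IH]; first by rewrite expr0 mul1r.
rewrite [iter k.+2 T y0]iterS [iter k.+1 T y0]iterS.
apply: le_trans (hc _ _) _.
rewrite exprS -mulrA; exact: ler_wpM2l.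
Qed.

Lemma iter_far y0 k i : norm1 (iter (k + i) T y0 - iter k T y0) <=
  norm1 (T y0 - y0) * q ^+ k * (1 - q ^+ i) / (1 - q).
Proof.
have q1' : 0 < 1 - q by rewrite subr_gt0.
elim: i => [|i IH].
  by rewrite addn0 norm1_0 expr0 subrr mulr0 mul0r.
rewrite addnS.
apply: le_trans (split3 _ (iter (k + i) T y0) _) _.
have h := iter_step y0 (k + i).
have e : norm1 (T y0 - y0) * q ^+ k * (1 - q ^+ i.+1) / (1 - q) =
  q ^+ (k + i) * norm1 (T y0 - y0) + norm1 (T y0 - y0) * q ^+ k * (1 - q ^+ i) / (1 - q).
  rewrite exprD exprS; field; by rewrite gt_eqF.
rewrite e; exact: lerD.
Qed.

Lemma iter_far' y0 k l : (k <= l)%N -> norm1 (iter l T y0 - iter k T y0) <=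
  norm1 (T y0 - y0) * q ^+ k / (1 - q).
Proof.
move=> kl; rewrite -(subnKC kl).
apply: le_trans (iter_far _ _ _) _.
have q1' : 0 < 1 - q by rewrite subr_gt0.
rewrite ler_pM2r ?invr_gt0 //.
have h0 : 0 <= norm1 (T y0 - y0) * q ^+ k by apply: mulr_ge0; [exact: norm1_ge0 | exact: exprn_ge0].
rewrite -[X in _ <= X]mulr1 ler_wpM2l //.
have : 0 <= q ^+ (l - k) by exact: exprn_ge0.
lra.
Qed.

Lemma fixed_unique L L' : T L = L -> T L' = L' -> L = L'.
Proof.
move=> h h'; apply: (@norm1_eq0 R n m L L').
have := hc L L'; rewrite h h' => H.
have := norm1_ge0 (L - L').
have q1' : 0 < 1 - q by rewrite subr_gt0.
have : (1 - q) * norm1 (L - L') <= 0 by rewrite mulrBl mul1r subr_le0.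
rewrite pmulr_rle0 // => h1 h2; apply/eqP; rewrite eq_le h1 h2.
done.
Qed.

Lemma apriori y0 L K : T L = L ->
  norm1 (iter K T y0 - L) <= q ^+ K / (1 - q) * norm1 (T y0 - y0).
Proof.
move=> hL.
have q1' : 0 < 1 - q by rewrite subr_gt0.
have h1 := split3 (iter K T y0) (iter K.+1 T y0) L.
rewrite (norm1_sym (iter K T y0) (iter K.+1 T y0)) in h1.
have h2 := iter_step y0 K.
have h3 : norm1 (iter K.+1 T y0 - L) <= q * norm1 (iter K T y0 - L).
  by rewrite iterS -{1}hL; exact: hc.
have : (1 - q) * norm1 (iter K T y0 - L) <= q ^+ K * norm1 (T y0 - y0) by lra.
rewrite -ler_pdivlMl //.
by rewrite mulrA [(1 - q)^-1 * _]mulrC.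
Qed.

Lemma le_eps (x : R) : (forall e, 0 < e -> x <= e) -> x <= 0.
Proof.
move=> h; rewrite leNgt; apply/negP => x0.
have := h (x / 2); rewrite divr_gt0 // => /(_ isT); lra.
Qed.

Lemma fixed_exists : exists L, T L = L.
Proof.
pose x k := iter k T 0.
pose d0 := norm1 (T 0 - 0 : 'M[R]_(n, m)).
have q1' : 0 < 1 - q by rewrite subr_gt0.
pose bb k := d0 * q ^+ k / (1 - q).
have d00 : 0 <= d0 := norm1_ge0 _.
have bb0 : forall k, 0 <= bb k.
  move=> k; rewrite /bb; apply: divr_ge0; last exact: ltW.
  apply: mulr_ge0 => //; exact: exprn_ge0.
have far : forall k l, (k <= l)%N -> norm1 (x l - x k) <= bb k.
  by move=> k l kl; apply: iter_far'.
have ent : forall k l i j, x k i j - x l i j <= bb k + bb l.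
  move=> k l i j; case: (leqP k l) => kl.
    have := le_trans (norm1_entry _ i j) (far k l kl); rewrite !mxE.
    have := bb0 l; move=> hb hh.
    rewrite distrC in hh; have := ler_norm (x k i j - x l i j); lra.
  have := le_trans (norm1_entry _ i j) (far l k (ltnW kl)); rewrite !mxE.
  have := bb0 k; move=> hb hh.
  have := ler_norm (x k i j - x l i j); lra.
pose Z i j := range (fun k => x k i j - bb k).
have hs : forall i j, has_sup (Z i j).
  move=> i j; split; first by exists (x 0%N i j - bb 0%N); exists 0%N.
  exists (x 0%N i j + bb 0%N) => z [k _ <-]; have := ent k 0%N i j; lra.
pose L := \matrix_(i, j) sup (Z i j).
have hL : forall k i j, `|L i j - x k i j| <= bb k.
  move=> k i j; rewrite mxE.
  have h1 : x k i j - bb k <= sup (Z i j).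
    by apply: sup_upper_bound => //; exists k.
  have h2 : sup (Z i j) <= x k i j + bb k.
    apply: ge_sup; first by exists (x 0%N i j - bb 0%N); exists 0%N.
    move=> z [l _ <-]; have := ent l k i j; lra.
  rewrite ler_norml; apply/andP; split; lra.
have hLn : forall k, norm1 (L - x k) <= (n * m)%:R * bb k.
  move=> k; rewrite norm1E -s2_const; apply: s2_le => i j.
  have e : (L - x k) i j = L i j - x k i j by rewrite !mxE.
  rewrite e; exact: hL.
exists L; apply: norm1_eq0; apply/eqP; rewrite eq_le norm1_ge0 andbT.
apply: le_eps => e e0.
set K := 2 * (n * m)%:R * d0 / (1 - q) + 1.
have K0 : 0 < K.
  have : 0 <= 2 * (n * m)%:R * d0 / (1 - q).
    apply: divr_ge0; last exact: ltW.
    by apply: mulr_ge0 => //; apply: mulr_ge0.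
  rewrite /K; lra.
have [k hk] := geom_small (q := q) (e := e / K) (introT andP (conj q0 q1)) (divr_gt0 e0 K0).
have h1 := split3 (T L) (x k.+1) L.
have h2 : norm1 (T L - x k.+1) <= q * ((n * m)%:R * bb k).
  rewrite /x iterS; apply: le_trans (hc _ _) _; apply: ler_wpM2l => //; exact: hLn.
have h3 : norm1 (x k.+1 - L) <= (n * m)%:R * bb k.+1 by rewrite norm1_sym; exact: hLn.
have hb : bb k.+1 <= bb k.
  rewrite /bb exprS ler_pM2r ?invr_gt0 // mulrCA.
  rewrite -[X in _ <= X]mul1r ler_wpM2r //; [|exact: ltW].
  apply: mulr_ge0 => //; exact: exprn_ge0.
have nm0 : 0 <= (n * m)%:R :> R by [].
have h4 : norm1 (T L - L) <= 2 * (n * m)%:R * bb k.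
  have : q * ((n * m)%:R * bb k) <= (n * m)%:R * bb k.
    rewrite -[X in _ <= X]mul1r ler_wpM2r //; [|exact: ltW].
    by apply: mulr_ge0.
  have : (n * m)%:R * bb k.+1 <= (n * m)%:R * bb k by apply: ler_wpM2l.
  lra.
apply: le_trans h4 _.
have e1 : 2 * (n * m)%:R * bb k = (2 * (n * m)%:R * d0 / (1 - q)) * q ^+ k.
  rewrite /bb; field; by rewrite gt_eqF.
rewrite e1.
have hk' : q ^+ k * K <= e by rewrite -ler_pdivlMr.
have hqk : 0 <= q ^+ k by exact: exprn_ge0.
rewrite /K in hk'.
nra.
Qed.
End Banach.
Theorem theorem1 (R : realType) (n m : nat) (a : 'cV[R]_n) (b : 'cV[R]_m)
    (H : 'M[R]_n) (C : 'M[R]_(n, m)) (lam : R)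
    (T : 'M[R]_(n, m) -> 'M[R]_(n, m)) :
  simplex_pos a -> simplex_pos b ->
  H^T = H ->
  norminf H < lam ->
  is_T_lambda a b H C lam T ->
  (exists q : R, 0 <= q < 1 /\
     forall A B : 'M[R]_(n, m), norm1 (T A - T B) <= q * norm1 (A - B)) /\
  (exists pistar : 'M[R]_(n, m),
     couplings_pos a b pistar /\ T pistar = pistar /\
     (forall pi, T pi = pi -> pi = pistar) /\
     forall pi0 : 'M[R]_(n, m), couplings a b pi0 ->
       forall K : nat,
         norm1 (iter K T pi0 - pistar) <=
           (norminf H / lam) ^+ K / (1 - norminf H / lam)
           * norm1 (T pi0 - pi0)).
Proof.
move=> sa sb hs hl hT.
have hc := contr sa sb hs hl hT.
have N0 := norminf_ge0 H.
have l0 : 0 < lam := le_lt_trans N0 hl.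
have q0 : 0 <= norminf H / lam by apply: divr_ge0 => //; exact: ltW.
have q1 : norminf H / lam < 1 by rewrite ltr_pdivrMr // mul1r.
split; first by exists (norminf H / lam); rewrite q0 q1.
have [L hL] := fixed_exists q0 q1 hc.
exists L; split; last split => //; last split.
- have [cL mL] := hT L.
  rewrite -hL; split => //; exact: T_pos sa sb l0 cL mL.
- move=> pi hpi; have := fixed_unique q1 hc; apply. exact: hpi. exact: hL.
- move=> pi0 _ K; have := apriori q0 q1 hc pi0 K hL. done.
Qed.
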